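(* Let $r\ge 3$, $k\ge 2$, let $H=(V,\mathcal{E})$ be an $r$-minimal hypergraph and let $c$ be a $k$-coloring of $H$. For $v\in V$ define: $d_1^i(v)=|\{e\in\mathcal{E}(v): |c(e)|=2,\ c(e\setminus\{v\})=\{i\}\}|$ for each color $i\ne c(v)$, and $d_1(v)=\sum_{i\ne c(v)}d_1^i(v)$; $d_2(v)=|\{e\in\mathcal{E}(v): |c(e)|=1\}|$; $d_3(v)=|\{e\in\mathcal{E}(v): |c(e)|=2 \text{ and there is } v'\in e,\ v'\ne v, \text{ with } |c(e\setminus\{v'\})|=1\}|$; $d_4(v)=|\mathcal{E}(v)|-(d_1(v)+d_2(v)+d_3(v))$; and $D_j=\sum_{v\in V}d_j(v)$ for $j=1,2,3,4$. Then: (1) $D_1+D_2+D_3+D_4=\sum_{v\in V}|\mathcal{E}(v)|$; (2) $D_3\ge (r-1)D_1$; (3) if $c$ is a Nash equilibrium of the game with NM players, then $D_1\ge (k-1)D_2$.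
   Context: A hypergraph $H=(V,\mathcal{E})$ consists of a finite set $V$ of vertices and a finite set $\mathcal{E}$ of nonempty subsets of $V$; it is $r$-minimal if $|e|\ge r$ for all $e\in\mathcal{E}$. A $k$-coloring is a map $c:V\to[k]$; for $S\subseteq V$, $c(S)$ is the set of colors of vertices of $S$. $\mathcal{E}(v)=\{e\in\mathcal{E}: v\in e\}$. With NM (non-monochromatic seeking) players, $u_v(c)=|\{e\in\mathcal{E}(v): |c(e)|>1\}|$. A coloring $c$ is a Nash equilibrium if $u_v(c)\ge u_v(c_{-v},i)$ for all $v\in V$, $i\in[k]$, where $(c_{-v},i)$ is $c$ with the color of $v$ replaced by $i$. *)

(* Defs.v *)
From mathcomp Require Import all_boot.
Set Implicit Arguments. Unset Strict Implicit. Unset Printing Implicit Defensive.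

Section Hyper.
Variables (V : finType) (k : nat).

Definition hypergraph (E : {set {set V}}) : Prop := forall e, e \in E -> e != set0.

Definition r_minimal (r : nat) (E : {set {set V}}) : Prop := forall e, e \in E -> r <= #|e|.

Definition colors (c : V -> 'I_k) (S : {set V}) : {set 'I_k} := c @: S.

Definition edges_at (E : {set {set V}}) (v : V) : {set {set V}} := [set e in E | v \in e].

Variables (E : {set {set V}}) (c : V -> 'I_k).

Definition d1i (v : V) (i : 'I_k) : nat :=
  #|[set e in edges_at E v | (#|colors c e| == 2) && (colors c (e :\ v) == [set i])]|.

Definition d1 (v : V) : nat := \sum_(i < k | i != c v) d1i v i.

Definition d2 (v : V) : nat := #|[set e in edges_at E v | #|colors c e| == 1]|.

Definition d3 (v : V) : nat :=
  #|[set e in edges_at E v | (#|colors c e| == 2) &&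
      [exists v', (v' \in e) && (v' != v) && (#|colors c (e :\ v')| == 1)]]|.

(* natural-number subtraction; it never truncates when r >= 3 *)
Definition d4 (v : V) : nat := #|edges_at E v| - (d1 v + d2 v + d3 v).

Definition D1 := \sum_(v : V) d1 v.
Definition D2 := \sum_(v : V) d2 v.
Definition D3 := \sum_(v : V) d3 v.
Definition D4 := \sum_(v : V) d4 v.

End Hyper.

Definition recolor (V : finType) (k : nat) (c : V -> 'I_k) (v : V) (i : 'I_k) : V -> 'I_k :=
  fun w => if w == v then i else c w.

Definition util_NM (V : finType) (k : nat) (E : {set {set V}}) (c : V -> 'I_k) (v : V) : nat :=
  #|[set e in edges_at E v | 1 < #|colors c e|]|.

Definition nash_NM (V : finType) (k : nat) (E : {set {set V}}) (c : V -> 'I_k) : Prop :=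
  forall (v : V) (i : 'I_k), util_NM E (recolor c v i) v <= util_NM E c v.

(* Main.v *)
Require Import Defs.
From mathcomp Require Import all_boot zify.
Set Implicit Arguments. Unset Strict Implicit.

Lemma card_sep (T : finType) (A : {set T}) (P : pred T) :
  #|[set x in A | P x]| = \sum_(x in A) (P x : nat).
Proof.
rewrite -sum1_card big_mkcond [RHS]big_mkcond /=.
apply: eq_bigr => x _; rewrite inE; by case: (x \in A); case: (P x).
Qed.

Lemma two_in (T : finType) (A : {set T}) a b :
  a \in A -> b \in A -> a != b -> 1 < #|A|.
Proof.
move=> aA bA ab; rewrite -[1 < _]/(2 <= _).
have <- : #|[set a; b]| = 2 by rewrite cards2 ab.
apply: subset_leq_card; apply/subsetP => x; rewrite !inE => /orP[]/eqP->//.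
Qed.

Lemma third (T : finType) (e : {set T}) v w : 3 <= #|e| ->
  exists u, [&& u \in e, u != v & u != w].
Proof.
move=> h.
have : 0 < #|e :\ v :\ w|.
  move: h; rewrite (cardsD1 v e) (cardsD1 w (e :\ v)).
  have := leq_b1 (v \in e); have := leq_b1 (w \in e :\ v); lia.
rewrite card_gt0 => /set0Pn[u]; rewrite !in_setD1 => /and3P[uw uv ue].
by exists u; rewrite ue uv uw.
Qed.

Lemma aux12 (n : nat) (b : bool) : (n == 1) + ((n == 2) && b) <= 1.
Proof. by case: n => [|[|[|n]]] //; case: b. Qed.

Section S.
Variables (V : finType) (k : nat) (c : V -> 'I_k).

Lemma colorsD1 (e : {set V}) (v : V) : v \in e ->
  colors c e = c v |: colors c (e :\ v).
Proof. by move=> ve; rewrite /colors -imsetU1 setD1K. Qed.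

Lemma colors_recolor (e : {set V}) (v : V) (i : 'I_k) : v \in e ->
  colors (recolor c v i) e = i |: colors c (e :\ v).
Proof.
move=> ve; rewrite /colors -{1}(setD1K ve) imsetU1 /recolor eqxx; congr (_ |: _).
apply: eq_in_imset => w; rewrite in_setD1 => /andP[/negbTE -> _]; done.
Qed.

Lemma mem_colors (e : {set V}) x : x \in e -> c x \in colors c e.
Proof. exact: imset_f. Qed.

Definition lone (v : V) (e : {set V}) : bool :=
  [exists i, (i != c v) && ((#|colors c e| == 2) && (colors c (e :\ v) == [set i]))].

Definition d3c (v : V) (e : {set V}) : bool :=
  (#|colors c e| == 2) &&
      [exists v', (v' \in e) && (v' != v) && (#|colors c (e :\ v')| == 1)].

Lemma lone_unique (e : {set V}) v v0 : 3 <= #|e| -> v \in e -> v0 \in e -> v != v0 ->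
  lone v e -> lone v0 e -> False.
Proof.
move=> he ve v0e nv /existsP[i /andP[ni /andP[_ /eqP hi]]]
  /existsP[j /andP[nj /andP[_ /eqP hj]]].
have [u /and3P[ue uv uv0]] := third v v0 he.
have : c v0 \in colors c (e :\ v) by apply: mem_colors; rewrite in_setD1 eq_sym nv.
rewrite hi inE => /eqP ci.
have : c v \in colors c (e :\ v0) by apply: mem_colors; rewrite in_setD1 nv.
rewrite hj inE => /eqP cj.
have : c u \in colors c (e :\ v) by apply: mem_colors; rewrite in_setD1 uv.
rewrite hi inE => /eqP cui.
have : c u \in colors c (e :\ v0) by apply: mem_colors; rewrite in_setD1 uv0.
rewrite hj inE => /eqP cuj.
by move: ni; rewrite cj -cuj cui eqxx.
Qed.

Lemma sum_lone v (e : {set V}) :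
  \sum_(i < k | i != c v) (((#|colors c e| == 2) && (colors c (e :\ v) == [set i])) : nat)
  = lone v e.
Proof.
case: (boolP (lone v e)) => [/existsP[i0 /andP[ni0 /andP[h2 hs]]] | nl].
  have h2' : #|colors c e| == 2 := h2.
  have hs' : colors c (e :\ v) = [set i0] := eqP hs.
  rewrite (bigD1 i0) //= h2' hs' eqxx big1 // => i /andP[_ ni].
  case: andP => // [[_ /eqP hh0]]; have hh := set1_inj hh0; by move: ni; rewrite hh eqxx.
apply: big1 => i ni; case: andP => // h; case/negP: nl; apply/existsP.
by exists i; apply/andP; split; [exact: ni | apply/andP; exact: h].
Qed.

Lemma part1_pt (e : {set V}) v : 3 <= #|e| -> v \in e ->
  lone v e + (#|colors c e| == 1) + d3c v e <= 1.
Proof.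
move=> he ve; case: (boolP (lone v e)) => [l|nl].
  move: (l) => /existsP[i /andP[ni /andP[/eqP h2 /eqP hs]]].
  rewrite h2 /= /d3c h2 /=.
  case: existsP => // [[v' /andP[/andP[v'e v'v] /eqP h1]]].
  have [u /and3P[ue uv uv']] := third v v' he.
  have : c u \in colors c (e :\ v) by apply: mem_colors; rewrite in_setD1 uv.
  rewrite hs inE => /eqP cu.
  have := two_in (A := colors c (e :\ v')) (a := c v) (b := c u).
  rewrite h1 ltnn; move=> H; exfalso; apply: notF; apply: H.
  - by apply: mem_colors; rewrite in_setD1 eq_sym v'v.
  - by apply: mem_colors; rewrite in_setD1 uv'.
  - by rewrite cu eq_sym.
rewrite /= add0n /d3c; exact: aux12.
Qed.

Lemma d1E (E : {set {set V}}) v :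
  d1 E c v = \sum_(e in edges_at E v) lone v e.
Proof.
rewrite /d1.
have h : forall i, d1i E c v i = \sum_(e in edges_at E v)
   (((#|colors c e| == 2) && (colors c (e :\ v) == [set i])) : nat).
  by move=> i; exact: card_sep.
transitivity (\sum_(i < k | i != c v) \sum_(e in edges_at E v)
   (((#|colors c e| == 2) && (colors c (e :\ v) == [set i])) : nat)).
  by apply: eq_bigr => i _; exact: h.
rewrite exchange_big; apply: eq_bigr => e _; exact: sum_lone.
Qed.

Lemma d3E (E : {set {set V}}) v :
  d3 E c v = \sum_(e in edges_at E v) d3c v e.
Proof. by rewrite /d3 card_sep. Qed.

Lemma swap (E : {set {set V}}) (F : V -> {set V} -> nat) :
  \sum_v \sum_(e in edges_at E v) F v e = \sum_(e in E) \sum_(v in e) F v e.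
Proof.
rewrite (eq_bigr (fun v => \sum_e (if e \in edges_at E v then F v e else 0))); last first.
  by move=> v _; rewrite big_mkcond.
rewrite exchange_big /= [RHS]big_mkcond; apply: eq_bigr => e _.
case: (boolP (e \in E)) => eE.
  rewrite [RHS]big_mkcond; apply: eq_bigr => v _; by rewrite inE eE.
by apply: big1 => v _; rewrite inE (negbTE eE).
Qed.

Lemma part2_edge (e : {set V}) r : 3 <= r -> r <= #|e| ->
  (r - 1) * \sum_(v in e) lone v e <= \sum_(v in e) d3c v e.
Proof.
move=> hr hre; have he : 3 <= #|e| := leq_trans hr hre.
case: (boolP [exists v0 in e, lone v0 e]) => [/existsP[v0 /andP[v0e l0]] | nl].
  have -> : \sum_(v in e) lone v e = 1.
    rewrite (bigD1 v0) //= l0 big1 // => v /andP[ve nv].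
    by case: (boolP (lone v e)) => // lv; case: (lone_unique he ve v0e nv lv l0).
  rewrite muln1 -card_sep.
  apply: leq_trans (_ : #|e :\ v0| <= _).
    by have := cardsD1 v0 e; rewrite v0e; lia.
  apply: subset_leq_card; apply/subsetP => w; rewrite in_setD1 inE => /andP[wv0 we].
  rewrite we /=; move: l0 => /existsP[i /andP[_ /andP[h2 /eqP hs]]].
  rewrite /d3c h2 /=; apply/existsP; exists v0; by rewrite v0e eq_sym wv0 hs cards1.
rewrite big1 ?muln0 // => v ve; case: (boolP (lone v e)) => // lv.
by case/negP: nl; apply/existsP; exists v; rewrite ve.
Qed.

Lemma part3_pt (e : {set V}) v (i : 'I_k) : 3 <= #|e| -> v \in e -> i != c v ->
  (1 < #|colors c e|) + (#|colors c e| == 1) <=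
  (1 < #|colors (recolor c v i) e|) +
  ((#|colors c e| == 2) && (colors c (e :\ v) == [set i])).
Proof.
move=> he ve ni.
have LE : (1 < #|colors c e|) + (#|colors c e| == 1) <= 1.
  by case: #|colors c e| => [|[|n]].
apply: leq_trans LE _; rewrite colors_recolor //.
set S := colors c (e :\ v).
case: (boolP (S == [set i])) => hS.
  have -> : #|colors c e| == 2.
    by rewrite (colorsD1 ve) -/S (eqP hS) cards2 (eq_sym (c v)) ni.
  by rewrite addn1.
suff -> : 1 < #|i |: S| by [].
have [w /and3P[we wv _]] := third v v he.
have cwS : c w \in S by apply: mem_colors; rewrite in_setD1 wv.
case: (boolP (c w == i)) => [/eqP cwi | cwi]; last first.
  by apply: (two_in (a := i) (b := c w)); rewrite ?setU11 ?setU1r // eq_sym.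
have iS : i \in S by rewrite -cwi.
case: (boolP (S :\ i == set0)) => [/eqP h0 | /set0Pn[j]].
  by case/negP: hS; rewrite -(setD1K iS) h0 setU0.
rewrite in_setD1 => /andP[ji jS].
by apply: (two_in (a := i) (b := j)); rewrite ?setU11 ?setU1r // eq_sym.
Qed.

End S.

Unset Implicit Arguments. Set Strict Implicit.

Theorem mainTheorem4 (V : finType) (r k : nat) (E : {set {set V}}) (c : V -> 'I_k) :
  3 <= r -> 2 <= k -> hypergraph E -> r_minimal r E ->
  [/\ D1 E c + D2 E c + D3 E c + D4 E c = \sum_(v : V) #|edges_at E v|,
      (r - 1) * D1 E c <= D3 E c
    & nash_NM E c -> (k - 1) * D2 E c <= D1 E c].
Proof.
move=> hr hk _ hmin.
have he : forall e, e \in E -> 3 <= #|e|.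
  by move=> e eE; apply: leq_trans hr (hmin e eE).
split.
- rewrite /D1 /D2 /D3 /D4 -!big_split /=; apply: eq_bigr => v _.
  rewrite /d4 subnKC //.
  rewrite d1E /d2 card_sep d3E -!big_split /= -sum1_card.
  apply: leq_sum => e; rewrite inE => /andP[eE ve]; exact: part1_pt (he e eE) ve.
- rewrite /D1 /D3; under eq_bigr do rewrite d1E. under [X in _ <= X]eq_bigr do rewrite d3E.
  rewrite !swap big_distrr /=; apply: leq_sum => e eE; exact: (@part2_edge V k c e r hr (hmin e eE)).
- move=> nash; rewrite /D1 /D2 big_distrr /=; apply: leq_sum => v _.
  rewrite /d1.
  have -> : (k - 1) * d2 E c v = \sum_(i < k | i != c v) d2 E c v.
    by rewrite sum_nat_const cardC1 card_ord subn1.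
  apply: leq_sum => i ni.
  have N := nash v i; rewrite /util_NM !card_sep in N.
  rewrite /d2 /d1i !card_sep.
  have key : \sum_(e in edges_at E v) ((1 < #|colors c e|) + (#|colors c e| == 1))
     <= \sum_(e in edges_at E v) ((1 < #|colors (recolor c v i) e|) +
          ((#|colors c e| == 2) && (colors c (e :\ v) == [set i]))).
    apply: leq_sum => e; rewrite inE => /andP[eE ve]; exact: (@part3_pt V k c e v i (he e eE) ve ni).
  rewrite !big_split /= in key.
  rewrite -(leq_add2l (\sum_(e in edges_at E v) (1 < #|colors c e|))).
  apply: leq_trans key _; by rewrite leq_add2r.
Qed.
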